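(* Let $b\in(0,1)$ be a dyadic rational with exactly $n\ge 2$ binary digits, i.e. $b=0.b_2b_3\cdots b_{n-1}1$ in base $2$. Then $$\mathrm{ext}(P_b)=\mathrm{ext}(P_{b-2^{1-n}})+\mathrm{ext}(P_{b+2^{1-n}}),$$ with the convention $\mathrm{ext}(P_1)=0$.
   Context: For a finite poset $P$, $\mathrm{ext}(P)$ denotes the number of linear extensions of $P$. Say a dyadic rational $b\in[0,1)$ ''has $n$ digits'' if its base-2 expansion needs exactly $n$ digits counting the digit before the point: $b=0$ has $1$ digit, and for $n\ge2$ the numbers with $n$ digits are $k/2^{n-1}$ with $k$ odd. Posets $P_b$ (with $|P_b|$ equal to the number of digits of $b$), together with distinguished elements $L_b,R_b$, are defined recursively. $P_0$ is a single element $R_0$ (no $L_0$). $P_{1/2}$ is the two-element chain $L_{1/2}<R_{1/2}$. For $n\ge2$ and $b$ with $n$ digits: (i) $P_{b-2^{-n}}$ is obtained from $P_b$ by adding a new element $x$ that lies below every element of $P_b$ except $L_b$, with which it is incomparable; set $R_{b-2^{-n}}=x$, $L_{b-2^{-n}}=L_b$. (ii) $P_{b+2^{-n}}$ is obtained from $P_b$ by adding a new element $x$ that lies below every element of $P_b$ except $R_b$ if $R_b$ is minimal in $P_b$ (in which case $x$ and $R_b$ are incomparable), and below every element of $P_b$ if $R_b$ is not minimal; set $L_{b+2^{-n}}=x$, $R_{b+2^{-n}}=R_b$. (In all cases $L_b$ is minimal in $P_b$.) *)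

(* Defs.v *)
From mathcomp Require Import all_boot all_fingroup.
Set Implicit Arguments. Unset Strict Implicit. Unset Printing Implicit Defensive.

(* A finite poset on the ground set {0, ..., card-1}; [rel x y] means x <= y.
   [Lp] and [Rp] are the distinguished elements L_b, R_b. *)
Record dposet := DPoset { card : nat; rel : nat -> nat -> bool; Lp : nat; Rp : nat }.

Definition ext (P : dposet) : nat :=
  #|[set s : {perm 'I_(card P)} |
      [forall x : 'I_(card P), forall y : 'I_(card P),
         rel P x y ==> (s x <= s y)]]|.

(* P_0 : a single element R_0 (L_0 does not exist; the field is a dummy). *)
Definition P0 : dposet := DPoset 1 (fun a b => a == b) 0 0.
Definition Phalf : dposet := DPoset 2 (fun a b => a <= b) 0 1.

(* Add a new element x (index card P) lying below every element of P except
   the element e (if e = Some y), with which it is incomparable. *)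
Definition add_below (P : dposet) (e : option nat) : nat -> nat -> bool :=
  fun a b =>
    if a == card P then (b == card P) || ((b < card P) && (Some b != e))
    else if b == card P then false else rel P a b.

(* Construction (i): P_{b - 2^{-n}} from P_b. *)
Definition opI (P : dposet) : dposet :=
  DPoset (card P).+1 (add_below P (Some (Lp P))) (Lp P) (card P).

Definition minimalb (P : dposet) (y : nat) : bool :=
  ~~ has (fun z => (z != y) && rel P z y) (iota 0 (card P)).

(* Construction (ii): P_{b + 2^{-n}} from P_b. *)
Definition opII (P : dposet) : dposet :=
  DPoset (card P).+1
    (add_below P (if minimalb P (Rp P) then Some (Rp P) else None))
    (card P) (Rp P).

(* [Praw m k] is P_b for b = k / 2^m in lowest terms (k odd if m >= 1).
   For m >= 2, b = k/2^m has m+1 digits and arises from its parent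
   b' = b + 2^{-m} (rule (i)) or b' = b - 2^{-m} (rule (ii)), where b' is the
   one of (k+1)/2^m, (k-1)/2^m whose reduced form has m digits. *)
Fixpoint Praw (m k : nat) : dposet :=
  match m with
  | 0 => P0
  | m'.+1 =>
      match m' with
      | 0 => Phalf
      | _ => if odd (k.+1)./2 then opI (Praw m' (k.+1)./2)
             else opII (Praw m' (k.-1)./2)
      end
  end.

(* Reduce k / 2^m to lowest terms (0 becomes 0/2^0). *)
Fixpoint dnorm (k m : nat) : nat * nat :=
  match m with
  | 0 => (k, 0)
  | m'.+1 => if odd k then (k, m'.+1) else dnorm k./2 m'
  end.

Definition Pb (k m : nat) : dposet := Praw (dnorm k m).2 (dnorm k m).1.

Definition extb (k m : nat) : nat := if k == 2 ^ m then 0 else ext (Pb k m).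

(* Main.v *)
Require Import Defs.
From mathcomp Require Import all_boot all_fingroup.
Import Defs.
Set Implicit Arguments. Unset Strict Implicit. Unset Printing Implicit Defensive.
Definition linext (P : dposet) (s : {perm 'I_(card P)}) : bool :=
  [forall x : 'I_(card P), forall y : 'I_(card P), rel P x y ==> (s x <= s y)].
Arguments linext : clear implicits.
Definition firstc (P : dposet) (y : nat) : nat :=
  #|[set s : {perm 'I_(card P)} | linext P s &&
      [exists i : 'I_(card P), (val i == y) && (val (s i) == 0)]]|.

Lemma extE P : ext P = #|[set s | linext P s]|. Proof. by []. Qed.

Lemma lift_perm_surj n (i j : 'I_n.+1) (s : 'S_n.+1) :
  s i = j -> exists t : 'S_n, s = lift_perm i j t.
Proof.
move=> sij.
have ne k : s (lift i k) != j by rewrite -sij (inj_eq perm_inj) eq_sym neq_lift.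
pose f k := odflt k (unlift j (s (lift i k))).
have fE k : lift j (f k) = s (lift i k).
  rewrite /f; case: (unliftP j (s (lift i k))) (ne k) => [u -> _ //| -> ].
  by rewrite eqxx.
have finj : injective f.
  by move=> a b fab; apply: (@lift_inj _ i); apply: (@perm_inj _ s); rewrite -!fE fab.
exists (perm finj); apply/permP => x.
case: (unliftP i x) => [k ->|->]; last by rewrite lift_perm_id.
by rewrite lift_perm_lift permE fE.
Qed.

Lemma lift_perm_inj n (i j : 'I_n.+1) : injective (lift_perm i j).
Proof.
move=> s t st; apply/permP => k; apply: (@lift_inj _ j).
by rewrite -!(lift_perm_lift i) st.
Qed.
Section AddBelow.
Variables (P : dposet) (e : option nat) (L' R' : nat).
Local Notation c := (card P).
Definition Qp := DPoset c.+1 (add_below P e) L' R'.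

Lemma bumpc (a : 'I_c) : bump c a = a.
Proof. by rewrite /bump leqNgt ltn_ord. Qed.

Lemma relQ_ll (a b : 'I_c) :
  rel Qp (lift (@ord_max c) a) (lift (@ord_max c) b) = rel P a b.
Proof. by rewrite /= /add_below !bumpc !ltn_eqF. Qed.
Lemma relQ_lm (a : 'I_c) : rel Qp (lift (@ord_max c) a) (@ord_max c) = false.
Proof. by rewrite /= /add_below !bumpc (ltn_eqF (ltn_ord a)) eqxx. Qed.
Lemma relQ_ml (b : 'I_c) :
  rel Qp (@ord_max c) (lift (@ord_max c) b) = (Some (val b) != e).
Proof. by rewrite /= /add_below !bumpc eqxx (ltn_eqF (ltn_ord b)) ltn_ord. Qed.

Lemma linext_lift (j : 'I_c.+1) (t : 'S_c) :
  linext Qp (lift_perm (@ord_max c) j t) =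
  linext P t && [forall b : 'I_c, (Some (val b) != e) ==> (j <= lift j (t b))].
Proof.
apply/idP/idP.
  move/forallP=> H; apply/andP; split.
    apply/forallP=> a; apply/forallP=> b; apply/implyP=> rab.
    have := implyP (forallP (H (lift (@ord_max c) a)) (lift (@ord_max c) b)).
    by rewrite relQ_ll rab !lift_perm_lift /= leq_bump2 => /(_ isT).
  apply/forallP=> b; apply/implyP=> hb.
  have := implyP (forallP (H (@ord_max c)) (lift (@ord_max c) b)).
  by rewrite relQ_ml hb lift_perm_lift lift_perm_id => /(_ isT).
case/andP=> /forallP Ht /forallP Hb; apply/forallP=> a; apply/forallP=> b.
case: (unliftP (@ord_max c) a) => [a' ->|->]; case: (unliftP (@ord_max c) b) => [b' ->|->].
- rewrite relQ_ll !lift_perm_lift /= leq_bump2.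
  exact: (forallP (Ht a') b').
- by rewrite relQ_lm.
- by rewrite relQ_ml lift_perm_lift lift_perm_id; exact: Hb.
- by rewrite leqnn implybT.
Qed.

Lemma card_max0 :
  #|[set s : 'S_c.+1 | linext Qp s && (s (@ord_max c) == ord0)]| = ext P.
Proof.
rewrite extE -(card_imset _ (@lift_perm_inj _ (@ord_max c) ord0)).
apply: eq_card => s; rewrite inE; apply/andP/imsetP.
  case=> ls /eqP s0; have [t st] := lift_perm_surj s0.
  exists t => //; rewrite inE; move: ls; rewrite st linext_lift.
  by case/andP.
case=> t; rewrite inE => lt ->; split; last by rewrite lift_perm_id.
by rewrite linext_lift lt /=; apply/forallP=> b; apply/implyP.
Qed.

Lemma bump1_pos (v : nat) : (1 <= bump 1 v) = (0 < v).
Proof. by case: v. Qed.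

Lemma card_max1 y (ey : e = Some y) (yc : y < c) (j : 'I_c.+1) (j1 : val j = 1) :
  #|[set s : 'S_c.+1 | linext Qp s && (s (@ord_max c) == j)]| = firstc P y.
Proof.
rewrite /firstc -(card_imset _ (@lift_perm_inj _ (@ord_max c) j)).
apply: eq_card => s; rewrite inE; apply/andP/imsetP.
  case=> ls /eqP sj; have [t st] := lift_perm_surj sj.
  exists t => //; rewrite inE; move: ls; rewrite st linext_lift.
  case/andP=> -> /forallP H /=.
  have c0 : 0 < c by apply: leq_ltn_trans (leq0n y) yc.
  pose i0 := (t^-1)%g (Ordinal c0).
  apply/existsP; exists i0; rewrite permKV eqxx andbT.
  apply/negPn/negP => hy.
  have := implyP (H i0); rewrite ey (inj_eq (@Some_inj _)) hy permKV /= j1 => /(_ isT).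
  by [].
case=> t; rewrite inE => /andP[lt /existsP[i /andP[/eqP iy /eqP ti0]]] ->.
split; last by rewrite lift_perm_id.
rewrite linext_lift lt /=; apply/forallP=> b; apply/implyP.
rewrite ey (inj_eq (@Some_inj _)) => hb.
rewrite /= j1 bump1_pos lt0n; apply/eqP => tb0.
have : b = i by apply: (@perm_inj _ t); apply: val_inj; rewrite /= tb0 ti0.
by move=> bi; move: hb; rewrite bi iy eqxx.
Qed.

Lemma key_le (s : 'S_c.+1) (w : 'I_c.+1) : linext Qp s ->
  w != @ord_max c -> Some (val w) != e -> s (@ord_max c) <= s w.
Proof.
move=> ls; case: (unliftP (@ord_max c) w) => [w' ->|->]; last by rewrite eqxx.
move=> _; rewrite /= bumpc => hw.
by have := implyP (forallP (forallP ls (@ord_max c)) (lift (@ord_max c) w')); rewrite relQ_ml hw => /(_ isT).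
Qed.

Lemma max_cases y (ey : e = Some y) (s : 'S_c.+1) : linext Qp s ->
  s (@ord_max c) != ord0 ->
  (val (s (@ord_max c)) == 1) && [exists i : 'I_c.+1, (val i == y) && (val (s i) == 0)].
Proof.
move=> ls sn0.
pose z := (s^-1)%g ord0.
have sz : s z = ord0 by rewrite permKV.
have zm : z != @ord_max c by apply: contra sn0 => /eqP <-; rewrite sz.
have zy : val z == y.
  apply/negPn/negP => hy.
  have := key_le ls zm; rewrite ey (inj_eq (@Some_inj _)) hy sz => /(_ isT).
  by rewrite leqn0 => h; move: sn0; rewrite -(inj_eq val_inj) /= h.
apply/andP; split; last by apply/existsP; exists z; rewrite zy sz eqxx.
have c1 : 1 < c.+1 by case: (z) zm => zv zl; rewrite -(inj_eq val_inj) /= ltnS; move: zl; rewrite ltnS leq_eqVlt => /orP[/eqP->|]; rewrite ?eqxx // => zl _; apply: leq_ltn_trans zl.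
pose w := (s^-1)%g (Ordinal c1).
have sw : s w = Ordinal c1 by rewrite permKV.
have s0 : 0 < s (@ord_max c) by rewrite lt0n; move: sn0; rewrite -(inj_eq val_inj).
case: (eqVneq w (@ord_max c)) => [wm|wm]; first by rewrite -wm sw.
have wz : val w != y.
  apply: contraNneq wm => wy.
  have : w = z by apply: val_inj; apply/eqP; rewrite wy eq_sym.
  by move=> wz'; have := congr1 val (congr1 s wz'); rewrite sw sz.
have := key_le ls wm; rewrite ey (inj_eq (@Some_inj _)) wz sw /= => /(_ isT) h.
by rewrite eqn_leq h.
Qed.

Lemma max_none (ey : e = None) (s : 'S_c.+1) : linext Qp s -> s (@ord_max c) = ord0.
Proof.
move=> ls; pose z := (s^-1)%g ord0.
have sz : s z = ord0 by rewrite permKV.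
case: (eqVneq z (@ord_max c)) => [<-|zm] //.
have := key_le ls zm; rewrite ey sz => /(_ isT).
by rewrite leqn0 => h; apply: val_inj; apply/eqP.
Qed.


Lemma ext_Q_some y (ey : e = Some y) (yc : y < c) : ext Qp = ext P + firstc P y.
Proof.
have c1 : 1 < c.+1 by apply: leq_ltn_trans (leq0n y) yc.
rewrite -card_max0 -(@card_max1 y ey yc (Ordinal c1)) // extE.
rewrite -[LHS](cardsID [set s : 'S_c.+1 | s (@ord_max c) == ord0]).
congr (_ + _); apply: eq_card => s; rewrite !inE; first by rewrite andbC.
case ls : (linext Qp s); rewrite //= ?andbF ?andbT //.
apply/idP/idP.
  by move=> h; case/andP: (max_cases ey ls h) => h1 _; rewrite -(inj_eq val_inj).
by move/eqP=> ->; rewrite -(inj_eq val_inj).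
Qed.

Lemma ext_Q_none (ey : e = None) : ext Qp = ext P.
Proof.
rewrite -card_max0 extE; apply: eq_card => s; rewrite !inE.
by case ls : (linext Qp s); rewrite //= (max_none ey ls) eqxx.
Qed.

Lemma first_Q_max : firstc Qp c = ext P.
Proof.
rewrite -card_max0 /firstc; apply: eq_card => s; rewrite !inE.
case ls : (linext Qp s) => //=.
apply/existsP/eqP.
  case=> i /andP[/eqP ic /eqP si0].
  have -> : @ord_max c = i by apply: val_inj; rewrite /= ic.
  by apply: val_inj.
by move=> h; exists (@ord_max c); rewrite /= eqxx h.
Qed.

Lemma first_Q_y y (ey : e = Some y) (yc : y < c) : firstc Qp y = firstc P y.
Proof.
have c1 : 1 < c.+1 by apply: leq_ltn_trans (leq0n y) yc.
rewrite -(@card_max1 y ey yc (Ordinal c1)) // /firstc; apply: eq_card => s; rewrite !inE.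
case ls : (linext Qp s) => //=.
apply/idP/idP.
  case/existsP=> i /andP[/eqP iy /eqP si0].
  have hm : s (@ord_max c) != ord0.
    apply/negP => /eqP sm.
    have : i = @ord_max c by apply: (@perm_inj _ s); rewrite sm; apply: val_inj.
    by move=> im; move: yc; rewrite -iy im /= ltnn.
  by case/andP: (max_cases ey ls hm) => h1 _; rewrite -(inj_eq val_inj).
move/eqP=> sm.
have hm : s (@ord_max c) != ord0 by rewrite sm -(inj_eq val_inj).
by case/andP: (max_cases ey ls hm).
Qed.

End AddBelow.

Lemma first_D (Pa : dposet) z y : z < card Pa -> z != y -> rel Pa z y -> firstc Pa y = 0.
Proof.
move=> zc zy rzy; apply/eqP; rewrite cards_eq0; apply/eqP/setP => s; rewrite !inE.
apply/negP => /andP[ls /existsP[i /andP[/eqP iy /eqP si0]]].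
have := implyP (forallP (forallP ls (Ordinal zc)) i); rewrite /= iy => /(_ rzy).
rewrite si0 leqn0 => /eqP h.
have : Ordinal zc = i by apply: (@perm_inj _ s); apply: val_inj; rewrite /= h si0.
by move=> zi; move: zy; rewrite -iy -zi eqxx.
Qed.


From mathcomp Require Import zify.

Lemma ext_P0 : ext P0 = 1.
Proof.
rewrite extE (_ : [set s | linext P0 s] = [set: 'S_1]) ?cardsT ?card_Sn //.
apply/setP => s; rewrite !inE; apply/forallP => x; apply/forallP => y.
by apply/implyP => /eqP /val_inj ->.
Qed.

Lemma Phalf_set : [set s | linext Phalf s] = [set 1%g].
Proof.
apply/setP => s; rewrite !inE; apply/idP/idP; last first.
  by move/eqP->; apply/forallP => x; apply/forallP => y; rewrite !perm1; apply/implyP.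
move=> ls.
have le := implyP (forallP (forallP ls ord0) ord_max) isT.
have ne : s ord0 != s ord_max by rewrite (inj_eq perm_inj).
move: ne; rewrite -(inj_eq val_inj) => ne.
have l0 := ltn_ord (s ord0); have l1 := ltn_ord (s ord_max).
have h0 : val (s ord0) = 0 by move: le ne l0 l1 => /=; lia.
have h1 : val (s ord_max) = 1 by move: le ne l0 l1 => /=; lia.
apply/eqP/permP => x; rewrite perm1; apply: val_inj.
case: x => [[|[|x]] hx] //.
  by rewrite (_ : Ordinal hx = ord0) ?h0 //; apply: val_inj.
by rewrite (_ : Ordinal hx = ord_max) ?h1 //; apply: val_inj.
Qed.

Lemma ext_Phalf : ext Phalf = 1.
Proof. by rewrite extE Phalf_set cards1. Qed.

Lemma first_Phalf0 : firstc Phalf 0 = 1.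
Proof.
rewrite /firstc -(cards1 (1%g : 'S_2)) -Phalf_set; apply: eq_card => s; rewrite !inE.
case ls : (linext Phalf s) => //=.
have : s \in [set s | linext Phalf s] by rewrite inE.
rewrite Phalf_set inE => /eqP ->.
by apply/existsP; exists ord0; rewrite perm1.
Qed.

Lemma first_Phalf1 : firstc Phalf 1 = 0.
Proof. by apply: (@first_D _ 0). Qed.

Lemma extb_double a m : extb (a.*2) m.+1 = extb a m.
Proof.
rewrite /extb expnS -mul2n eqn_pmul2l // /Pb mul2n.
by rewrite (_ : dnorm (a.*2) m.+1 = dnorm a m) // /= odd_double doubleK.
Qed.

Lemma extb_odd k m : odd k -> extb k m.+1 = ext (Praw m.+1 k).
Proof.
move=> ok; rewrite /extb /Pb /= ok.
have -> : (k == 2 ^ m.+1) = false.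
  by apply/negbTE/negP => /eqP ke; move: ok; rewrite ke oddX.
by [].
Qed.
Definition Inv (P : dposet) (m k : nat) : Prop :=
  [/\ ext P = firstc P (Lp P) + firstc P (Rp P),
      firstc P (Lp P) = extb k.-1 m, firstc P (Rp P) = extb k.+1 m,
      Lp P < card P & Rp P < card P].

Lemma main_inv m : forall k, odd k -> k < 2 ^ m.+1 -> Inv (Praw m.+1 k) m.+1 k.
Proof.
elim: m => [|m IH] k ok kb.
  have -> : k = 1 by move: ok kb; rewrite expn1; case: k => [|[|k]].
  have -> : Praw 1 1 = Phalf by [].
  split => //.
  - by rewrite ext_Phalf first_Phalf0 first_Phalf1.
  - by rewrite first_Phalf0 /extb /Pb /= ext_P0.
  - by rewrite first_Phalf1.
have kE : k = (k./2).*2.+1 by rewrite -[LHS]odd_double_half ok add1n.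
rewrite kE; rewrite kE in ok kb; move: (k./2) ok kb => h ok kb; clear kE.
have hb : h < 2 ^ m.+1 by move: kb; rewrite (expnS 2 m.+1) mul2n; lia.
have PE : forall x, Praw m.+2 x = if odd (x.+1)./2 then opI (Praw m.+1 (x.+1)./2)
    else opII (Praw m.+1 (x.-1)./2) by [].
rewrite PE.
have -> : (h.*2.+2)./2 = h.+1 by rewrite -doubleS doubleK.
have -> : (h.*2.+1).-1./2 = h by rewrite /= doubleK.
rewrite /Inv.
have -> : (h.*2.+1).-1 = h.*2 by [].
have -> : h.*2.+2 = (h.+1).*2 by rewrite doubleS.
rewrite !extb_double.
case oh: (odd h.+1).
  have hb1 : h.+1 < 2 ^ m.+1.
    rewrite ltn_neqAle hb andbT; apply/negP => /eqP he.
    by move: oh; rewrite he oddX.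
  set P := Praw m.+1 h.+1.
  have [IE IL IR Lc Rc] := IH h.+1 oh hb1.
  have e1 := @ext_Q_some P (Some (Lp P)) (Lp P) (card P) (Lp P) erefl Lc.
  have f1 := @first_Q_y P (Some (Lp P)) (Lp P) (card P) (Lp P) erefl Lc.
  have f2 := @first_Q_max P (Some (Lp P)) (Lp P) (card P).
  have -> : opI P = Qp P (Some (Lp P)) (Lp P) (card P) by [].
  split => //.
  - by rewrite e1 f1 f2 addnC.
  - by rewrite f1 IL.
  - by rewrite f2 extb_odd.
  - exact: ltnW.
have oh' : odd h by move: oh => /= /negbFE.
set P := Praw m.+1 h.
have [IE IL IR Lc Rc] := IH h oh' hb.
have -> : opII P = Qp P (if minimalb P (Rp P) then Some (Rp P) else None) (card P) (Rp P) by [].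
case mR : (minimalb P (Rp P)).
  have e1 := @ext_Q_some P (Some (Rp P)) (card P) (Rp P) (Rp P) erefl Rc.
  have f1 := @first_Q_y P (Some (Rp P)) (card P) (Rp P) (Rp P) erefl Rc.
  have f2 := @first_Q_max P (Some (Rp P)) (card P) (Rp P).
  split => //.
  - by rewrite e1 f1 f2.
  - by rewrite f2 extb_odd.
  - by rewrite f1 IR.
  - exact: ltnW.
have e1 := @ext_Q_none P None (card P) (Rp P) erefl.
have f2 := @first_Q_max P None (card P) (Rp P).
move/negbT: mR; rewrite /minimalb negbK => /hasP [z]; rewrite mem_iota add0n => /andP[_ zc] /andP[zR rzR].
have f0 : firstc P (Rp P) = 0 by apply: (first_D zc).
have f1 : firstc (Qp P None (card P) (Rp P)) (Rp P) = 0.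
  apply: (@first_D _ z) => //=; first by apply: ltnW.
  by rewrite /add_below (ltn_eqF zc) (ltn_eqF Rc).
split => //.
- by rewrite e1 f1 f2 addn0.
- by rewrite f2 extb_odd.
- by rewrite f1 -IR f0.
- exact: ltnW.
Qed.

Theorem proposition3p1 (n k : nat) :
  2 <= n -> odd k -> k < 2 ^ n.-1 ->
  extb k n.-1 = extb k.-1 n.-1 + extb k.+1 n.-1.
Proof.
case: n => [|[|m]] // _ ok kb.
have [IE IL IR _ _] := main_inv ok kb.
by rewrite /= extb_odd // IE IL IR.
Qed.
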